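(* Let $\mathcal{C}_1$ be an even-like $[n,k_1,d_1]_2$ binary linear code, let $\mathcal{C}_2$ be the $[n,1,n]_2$ repetition code generated by the all-ones vector, and let $\mathcal{C}=\{(\mathbf{u},\mathbf{u}+\mathbf{v}):\mathbf{u}\in\mathcal{C}_1,\mathbf{v}\in\mathcal{C}_2\}$. Then: 1) $\mathcal{C}$ is a binary almost Euclidean self-orthogonal code if and only if $n$ is odd; 2) $\mathcal{C}$ is a binary Euclidean self-orthogonal code if and only if $n$ is even.
   Context: A binary code is even-like if every codeword has even Hamming weight. For a binary $[N,k,d]_2$ code $\mathcal{C}$, $\mathrm{Hull}_E(\mathcal{C})=\mathcal{C}\cap\mathcal{C}^{\perp_E}$ with $\perp_E$ the dual under $\sum_ix_iy_i$; $\mathcal{C}$ is Euclidean self-orthogonal if $\dim(\mathrm{Hull}_E(\mathcal{C}))=k$ and almost Euclidean self-orthogonal if $\dim(\mathrm{Hull}_E(\mathcal{C}))=k-1$. *)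

(* Defs.v *)
From HB Require Import structures.
From mathcomp Require Import all_boot all_order all_algebra.
Set Implicit Arguments. Unset Strict Implicit. Unset Printing Implicit Defensive.
Import GRing.Theory.
Local Open Scope ring_scope.

Definition dotE (F : fieldType) (n : nat) (x y : 'rV[F]_n) : F :=
  \sum_(i < n) x 0 i * y 0 i.

Definition wt (F : fieldType) (n : nat) (x : 'rV[F]_n) : nat :=
  #|[set i : 'I_n | x 0 i != 0]|.

Definition even_like (F : fieldType) (n : nat) (C : {vspace 'rV[F]_n}) : Prop :=
  forall x, x \in C -> ~~ odd (wt x).

(* Euclidean dual: the subspace spanned by (= equal to) the set of all
   vectors orthogonal to every codeword (the ambient space is finite). *)
Definition dualE (F : finFieldType) (n : nat) (C : {vspace 'rV[F]_n})
  : {vspace 'rV[F]_n} :=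
  <<[seq y <- enum [set: 'rV[F]_n] |
       [forall x : 'rV[F]_n, (x \in C) ==> (dotE x y == 0%R)]]>>%VS.

Definition hullE (F : finFieldType) (n : nat) (C : {vspace 'rV[F]_n})
  : {vspace 'rV[F]_n} := (C :&: dualE C)%VS.

Definition self_orthE (F : finFieldType) (n : nat) (C : {vspace 'rV[F]_n}) : Prop :=
  \dim (hullE C) = \dim C.

Definition almost_self_orthE (F : finFieldType) (n : nat) (C : {vspace 'rV[F]_n}) : Prop :=
  (\dim (hullE C)).+1 = \dim C.

Definition ones (F : fieldType) (n : nat) : 'rV[F]_n := const_mx 1.
Definition rep_code (F : fieldType) (n : nat) : {vspace 'rV[F]_n} := <[ones F n]>%VS.

(* Main.v *)
Require Import Defs.
From mathcomp Require Import all_boot all_order all_algebra.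
From mathcomp Require Import zify.
Import GRing.Theory.
Local Open Scope ring_scope.

Section Dot.
Variables (F : fieldType) (n : nat).
Implicit Types x y z : 'rV[F]_n.

Lemma dotEDr x y z : dotE x (y + z) = dotE x y + dotE x z.
Proof. by rewrite /dotE -big_split; apply: eq_bigr => i _; rewrite !mxE mulrDr. Qed.
Lemma dotEDl x y z : dotE (y + z) x = dotE y x + dotE z x.
Proof. by rewrite /dotE -big_split; apply: eq_bigr => i _; rewrite !mxE mulrDl. Qed.
Lemma dotEZr a x y : dotE x (a *: y) = a * dotE x y.
Proof. by rewrite /dotE mulr_sumr; apply: eq_bigr => i _; rewrite !mxE mulrCA. Qed.
Lemma dotEZl a x y : dotE (a *: x) y = a * dotE x y.
Proof. by rewrite /dotE mulr_sumr; apply: eq_bigr => i _; rewrite !mxE mulrA. Qed.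
Lemma dotE0r x : dotE x 0 = 0.
Proof. by rewrite /dotE big1 // => i _; rewrite mxE mulr0. Qed.
Lemma dotEC x y : dotE x y = dotE y x.
Proof. by apply: eq_bigr => i _; rewrite mulrC. Qed.
End Dot.

Lemma dotE_row (F : fieldType) (m : nat) (a b c d : 'rV[F]_m) :
  dotE (row_mx a b) (row_mx c d) = dotE a c + dotE b d.
Proof. by rewrite /dotE big_split_ord /=; congr (_ + _); apply: eq_bigr => i _;
  rewrite ?row_mxEl ?row_mxEr. Qed.

Lemma dualE_P (F : finFieldType) (n : nat) (C : {vspace 'rV[F]_n}) y :
  reflect (forall x, x \in C -> dotE x y = 0) (y \in dualE C).
Proof.
apply: (iffP idP) => [yD x xC | H].
  move: yD; rewrite /dualE.
  set s := [seq _ <- _ | _] => yD.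
  have := coord_span (X := in_tuple s) yD => ->.
  apply: (big_ind (fun z => dotE x z = 0)).
  - exact: dotE0r.
  - by move=> a b Ha Hb; rewrite dotEDr Ha Hb addr0.
  move=> i _; rewrite dotEZr.
  have : (in_tuple s)`_i \in s by apply: mem_nth; exact: ltn_ord.
  rewrite mem_filter => /andP[/forallP /(_ x) /implyP /(_ xC) /eqP -> _].
  by rewrite mulr0.
apply: memv_span; rewrite mem_filter mem_enum in_setT andbT.
by apply/forallP => x; apply/implyP => xC; apply/eqP; apply: H.
Qed.

Lemma F2_add (a : 'F_2) : a + a = 0.
Proof. case: a => [[|[|k]] Hk]; try by apply/val_inj. Qed.

Lemma F2_nat (k : nat) : (k%:R : 'F_2) = (odd k)%:R.
Proof.
elim: k => // k IH; rewrite mulrSr IH /=.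
by case: (odd k) => //=; [apply/val_inj | rewrite add0r].
Qed.

Lemma F2_bit (a : 'F_2) : a = (a != 0)%:R.
Proof. case: a => [[|[|k]] Hk]; try by apply/val_inj. Qed.

Lemma dot_ones (m : nat) (u : 'rV['F_2]_m) : dotE u (ones 'F_2 m) = (odd (wt u))%:R.
Proof.
rewrite -F2_nat /dotE /wt.
under eq_bigr => i _ do rewrite mxE mulr1 (F2_bit (u 0 i)).
rewrite -natr_sum; congr (_%:R).
rewrite -sum1_card [RHS]big_mkcond /=; apply: eq_bigr => i _.
by rewrite inE; case: (_ != _).
Qed.

Lemma dot_ones_ones (m : nat) : dotE (ones 'F_2 m) (ones 'F_2 m) = m%:R.
Proof.
rewrite /dotE; under eq_bigr => i _ do rewrite !mxE mulr1.
by rewrite sumr_const card_ord.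
Qed.

Theorem lemma8 (n : nat) (C1 : {vspace 'rV['F_2]_n})
  (C : {vspace 'rV['F_2]_(n + n)}) :
  (0 < n)%N ->
  even_like C1 ->
  (forall x : 'rV['F_2]_(n + n),
      x \in C <-> exists u v, u \in C1 /\ v \in rep_code 'F_2 n /\
                             x = row_mx u (u + v)) ->
  (almost_self_orthE C <-> odd n) /\ (self_orthE C <-> ~~ odd n).
Proof.
move=> n0 ev HC.
set one := ones 'F_2 n.
have mkC u b : u \in C1 -> row_mx u (u + b *: one) \in C.
  move=> uC; apply/HC; exists u, (b *: one); split => //; split => //.
  by apply/vlineP; exists b.
have decC x : x \in C -> exists u b, u \in C1 /\ x = row_mx u (u + b *: one).
  move/HC => [u [v [uC [/vlineP [b ->] ->]]]]; by exists u, b.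
have d1 u : u \in C1 -> dotE u one = 0.
  by move=> uC; rewrite dot_ones; move: (ev u uC); case: (odd _).
have dot u u' b b' : u \in C1 -> u' \in C1 ->
    dotE (row_mx u (u + b *: one)) (row_mx u' (u' + b' *: one)) = b * (b' * n%:R).
  move=> uC uC'.
  rewrite dotE_row !dotEDl !dotEDr !dotEZl !dotEZr (d1 u) // (@dotEC _ _ one u') (d1 u') //.
  by rewrite /one dot_ones_ones !mulr0 !addr0 add0r addrA F2_add add0r.
have HH : (hullE C <= C)%VS by apply: capvSl.
case On: (odd n).
- set w := row_mx (0 : 'rV['F_2]_n) one.
  have ew : w = row_mx 0 (0 + 1 *: one) by rewrite add0r scale1r.
  have wC : w \in C by rewrite ew; apply: mkC; apply: mem0v.
  have Nn : (n%:R : 'F_2) = 1 by rewrite F2_nat On.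
  have ww : dotE w w = 1 by rewrite ew dot ?mem0v // mul1r mul1r.
  have wn0 : w != 0.
    rewrite row_mx_eq0 eqxx /=; apply/negP => /eqP /matrixP /(_ 0 (Ordinal n0)).
    by rewrite !mxE => /eqP; rewrite oner_eq0.
  have cap0 : (hullE C :&: <[w]> = 0)%VS.
    apply/eqP; rewrite -subv0; apply/subvP => x.
    rewrite memv_cap memv0 => /andP [xH /vlineP [k xk]]; rewrite xk in xH *.
    move: xH; rewrite /hullE memv_cap => /andP [_ /dualE_P /(_ w wC)].
    by rewrite dotEZr ww mulr1 => ->; rewrite scale0r.
  have eC : C = (hullE C + <[w]>)%VS.
    apply/eqP; rewrite eqEsubv subv_add HH /=.
    rewrite -memvE wC andbT; apply/subvP => x /[dup] xC /decC [u [b [uC ->]]].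
    have -> : row_mx u (u + b *: one) = row_mx u (u + 0 *: one) + b *: w.
      by rewrite scale_row_mx add_row_mx scale0r addr0 scaler0 addr0.
    apply: memv_add; last by rewrite memvZ // memv_line.
    rewrite /hullE memv_cap mkC //=; apply/dualE_P => y /decC [u' [b' [uC' ->]]].
    by rewrite dot // mul0r mulr0.
  have dC : \dim C = (\dim (hullE C)).+1.
    by rewrite {1}eC dimv_disjoint_sum // dim_vline wn0 addn1.
  rewrite /almost_self_orthE /self_orthE dC; split; split => // h; lia.
- have sub : (C <= dualE C)%VS.
    apply/subvP => x /decC [u [b [uC ->]]]; apply/dualE_P => y /decC [u' [b' [uC' ->]]].
    by rewrite (dot u' u b' b uC' uC) F2_nat On !mulr0.
  have eH : hullE C = C by apply/capv_idPl.
  rewrite /almost_self_orthE /self_orthE eH; split; split => // h; lia.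
Qed.
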